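(* There is an absolute constant $C>0$ such that if $H_1=(V,\mathcal{E}_1)$ and $H_2=(V,\mathcal{E}_2)$ are tri-hypergraphs on the same ground set, each of VC-dimension at most $d$ with $d\geq1$, then the intersection tri-hypergraph $H_1\cap H_2$ has VC-dimension at most $Cd$.
   Context: A tri-hypergraph is a pair $H=(V,\mathcal{E})$ where $V$ is a finite set and $\mathcal{E}$ is a collection of ordered partitions $(B,R,W)$ of $V$ into three (possibly empty) parts (tri-edges). $X\subseteq V$ is shattered if for every $Y\subseteq X$ there is a tri-edge with $X\cap B=X\cap(B\cup R)=Y$; the VC-dimension is the largest size of a shattered set. For tri-edges $e_1=(B_1,R_1,W_1)$, $e_2=(B_2,R_2,W_2)$, $e_1\cap e_2=(B,R,W)$ with $B=B_1\cap B_2$, $R=((B_1\cup R_1)\cap(B_2\cup R_2))\setminus B$ and $W=V\setminus(B\cup R)$. $H_1\cap H_2=(V,\{e_1\cap e_2:e_1\in\mathcal{E}_1,e_2\in\mathcal{E}_2\})$. *)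

(* Defs.v *)
From HB Require Import structures.
From mathcomp Require Import all_boot.
Set Implicit Arguments. Unset Strict Implicit. Unset Printing Implicit Defensive.

Inductive col := Bc | Rc | Wc.
Definition col_code (c : col) : 'I_3 :=
  match c with Bc => inord 0 | Rc => inord 1 | Wc => inord 2 end.
Definition col_decode (i : 'I_3) : col :=
  match val i with 0 => Bc | 1 => Rc | _ => Wc end.
Lemma col_codeK : cancel col_code col_decode.
Proof. by case; rewrite /col_decode /= inordK. Qed.
HB.instance Definition _ := Finite.copy col (can_type col_codeK).

(* A tri-edge (B,R,W) on V is encoded by the map V -> col sending x to the part
   containing it; this is exactly an ordered partition into three parts. *)
Definition triedge (V : finType) := {ffun V -> col}.
Definition Bpart (V : finType) (e : triedge V) : {set V} := [set x | e x == Bc].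
Definition Rpart (V : finType) (e : triedge V) : {set V} := [set x | e x == Rc].
Definition Wpart (V : finType) (e : triedge V) : {set V} := [set x | e x == Wc].

Definition trihyp (V : finType) := {set triedge V}.

Definition shattered (V : finType) (E : trihyp V) (X : {set V}) : bool :=
  [forall Y : {set V}, (Y \subset X) ==>
     [exists e in E, (X :&: Bpart e == Y) && (X :&: (Bpart e :|: Rpart e) == Y)]].

(* VC-dimension: the largest size of a shattered set (0 if none is shattered). *)
Definition vcdim (V : finType) (E : trihyp V) : nat :=
  \max_(X : {set V} | shattered E X) #|X|.

(* Build a tri-edge from B and R (W = V \ (B ∪ R)); B takes priority. *)
Definition mk_triedge (V : finType) (B R : {set V}) : triedge V :=
  [ffun x => if x \in B then Bc else if x \in R then Rc else Wc].

Definition triedge_cap (V : finType) (e1 e2 : triedge V) : triedge V :=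
  let B := Bpart e1 :&: Bpart e2 in
  mk_triedge B (((Bpart e1 :|: Rpart e1) :&: (Bpart e2 :|: Rpart e2)) :\: B).

Definition trihyp_cap (V : finType) (E1 E2 : trihyp V) : trihyp V :=
  [set triedge_cap e1 e2 | e1 in E1, e2 in E2].

(* Main.v *)
Require Import Defs.
From mathcomp Require Import zify.
From mathcomp Require Import all_boot.
Set Implicit Arguments. Unset Strict Implicit. Unset Printing Implicit Defensive.


Section Pajor.
Variable V : finType.

Definition shat (F : {set {set V}}) (Z : {set V}) : bool :=
  [forall W : {set V}, (W \subset Z) ==> [exists A in F, A :&: Z == W]].

Definition shs (F : {set {set V}}) := [set Z | shat F Z].

Lemma shatP (F : {set {set V}}) (Z : {set V}) : reflect (forall W : {set V}, W \subset Z -> exists2 A, A \in F & A :&: Z = W) (shat F Z).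
Proof.
apply: (iffP forallP) => [H W sW | H W].
  by have /implyP/(_ sW)/existsP[A /andP[AF /eqP e]] := H W; exists A.
apply/implyP=> sW; have [A AF e] := H W sW; apply/existsP; exists A; by rewrite AF e eqxx.
Qed.

Lemma shat_sub (F : {set {set V}}) (Z : {set V}) : shat F Z -> exists2 A, A \in F & Z \subset A.
Proof.
move/shatP/(_ Z (subxx Z))=> [A AF e]; exists A => //.
by rewrite -e subsetIl.
Qed.

Lemma pajor_gen n : forall (U : {set V}) (F : {set {set V}}),
  #|U| <= n -> (forall A, A \in F -> A \subset U) -> #|F| <= #|shs F|.
Proof.
elim: n => [|n IH] U F hU hF.
  have U0 : U = set0 by apply/eqP; rewrite -cards_eq0; case: #|U| hU.
  have [F0|[A AF]] := set_0Vmem F; first by rewrite F0 cards0.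
  have sF : F \subset [set set0].
    apply/subsetP=> B BF; rewrite inE; have := hF B BF; rewrite U0 subset0 => ->. done.
  apply: (leq_trans (subset_leq_card sF)); rewrite cards1 card_gt0.
  apply/set0Pn; exists set0; rewrite inE; apply/shatP=> W; rewrite subset0 => /eqP ->.
  by exists A; rewrite // setI0.
have [U0|[x xU]] := set_0Vmem U.
  by apply: (IH U) => //; rewrite U0 cards0.
pose F0 := [set A in F | x \notin A].
pose F1 := [set A :\ x | A in [set A in F | x \in A]].
have eF : #|F| = #|F0| + #|F1|.
  rewrite card_in_imset; last first.
    move=> A B; rewrite !inE => /andP[_ xA] /andP[_ xB] e.
    by rewrite -(setD1K xA) -(setD1K xB) e.
  rewrite -(cardsID [set A : {set V} | x \in A] F) addnC; congr (_ + _); apply: eq_card => A; rewrite !inE //.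
  by rewrite andbC.
have hU' : #|U :\ x| <= n by rewrite (cardsD1 x U) xU in hU.
have hG : forall A, A \in F0 :|: F1 -> A \subset U :\ x.
  move=> A; rewrite !inE => /orP[/andP[AF xA]|/imsetP[B]].
    by rewrite subsetD1 xA hF.
  rewrite inE => /andP[BF xB] ->; by rewrite setSD // hF.
have hI : forall A, A \in F0 :&: F1 -> A \subset U :\ x.
  by move=> A; rewrite inE => /andP[A0 A1]; apply: hG; rewrite inE A0.
have IH1 := IH _ _ hU' hG.
have IH2 := IH _ _ hU' hI.
have xnG : forall Z, shat (F0 :|: F1) Z -> x \notin Z.
  move=> Z /shat_sub[A /hG sA sZ]; apply/negP=> xZ.
  by have := subsetP (subset_trans sZ sA) x xZ; rewrite !inE eqxx.
have xnI : forall Z, shat (F0 :&: F1) Z -> x \notin Z.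
  move=> Z /shat_sub[A /hI sA sZ]; apply/negP=> xZ.
  by have := subsetP (subset_trans sZ sA) x xZ; rewrite !inE eqxx.
have S1 : shs (F0 :|: F1) \subset shs F.
  apply/subsetP=> Z; rewrite !inE => hZ; have xZ := xnG _ hZ.
  apply/shatP=> W sW; have/shatP/(_ W sW) [A AG e] := hZ.
  move: AG; rewrite !inE => /orP[/andP[AF _]|/imsetP[B]]; first by exists A.
  rewrite inE => /andP[BF xB] eA; exists B => //; rewrite -e eA.
  apply/setP=> y; rewrite !inE; case: eqP => [->|//]; by rewrite (negbTE xZ) !andbF.
have S2 : [set x |: Z | Z in shs (F0 :&: F1)] \subset shs F.
  apply/subsetP=> Z' /imsetP[Z]; rewrite inE => hZ ->; have xZ := xnI _ hZ; rewrite inE.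
  apply/shatP=> W sW.
  have sW' : W :\ x \subset Z.
    apply/subsetP=> y; rewrite !inE => /andP[yx yW]; move: (subsetP sW y yW); by rewrite !inE (negbTE yx).
  have/shatP/(_ _ sW') [A AG e] := hZ.
  move: AG; rewrite inE => /andP[A0 A1].
  have [xW|xW] := boolP (x \in W).
    move: A1 => /imsetP[B]; rewrite inE => /andP[BF xB] eA; exists B => //.
    apply/setP=> y; have := congr1 (fun S : {set V} => y \in S) e; rewrite eA !inE.
    case: (y =P x) => [->|_] /=; first by rewrite xB xW.
    by move=> <-.
  move: A0; rewrite inE => /andP[AF xA]; exists A => //.
  apply/setP=> y; have := congr1 (fun S : {set V} => y \in S) e; rewrite !inE.
  case: (y =P x) => [->|_] /=; first by rewrite (negbTE xA) (negbTE xW).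
  by move=> <-.
have D : [disjoint shs (F0 :|: F1) & [set x |: Z | Z in shs (F0 :&: F1)]].
  rewrite -setI_eq0; apply/eqP/setP=> Z; rewrite !inE; apply/negP=> /andP[hZ /imsetP[Z' _ e]].
  by have := xnG _ hZ; rewrite e setU11.
have C2 : #|[set x |: Z | Z in shs (F0 :&: F1)]| = #|shs (F0 :&: F1)|.
  rewrite card_in_imset // => Z1 Z2; rewrite !inE => h1 h2 e.
  by rewrite -(setU1K (xnI _ h1)) -(setU1K (xnI _ h2)) e.
have S12 : shs (F0 :|: F1) :|: [set x |: Z | Z in shs (F0 :&: F1)] \subset shs F by rewrite subUset S1 S2.
have := subset_leq_card S12.
rewrite cardsU.
move: D; rewrite -setI_eq0 => /eqP ->; rewrite cards0 subn0 C2 => h.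
apply: leq_trans h; rewrite eF -[#|F0| + _]cardsUI; exact: leq_add.
Qed.

Lemma pajor (F : {set {set V}}) : #|F| <= #|shs F|.
Proof. by apply: (@pajor_gen #|[set: V]| setT) => // A _; apply: subsetT. Qed.
End Pajor.

Section Count.
Variable V : finType.

Lemma sum_subsets (X : {set V}) (G : nat -> nat) :
  \sum_(Z : {set V} | Z \subset X) G #|Z| = \sum_(k < #|X|.+1) 'C(#|X|, k) * G k.
Proof.
rewrite (partition_big (fun Z : {set V} => (inord #|Z| : 'I_#|X|.+1)) xpredT) //=.
apply: eq_bigr => k _.
rewrite (eq_bigr (fun _ => G k)); last first.
  move=> Z /andP[sZ /eqP <-]; rewrite inordK //; rewrite ltnS; exact: subset_leq_card.
rewrite sum_nat_const -(cards_draws X k); congr (_ * _); apply: eq_card => Z.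
rewrite !inE unfold_in /=; case sZ: (Z \subset X) => //=.
have hZ : #|Z| < #|X|.+1 by rewrite ltnS subset_leq_card.
apply/eqP/eqP => [<-|e]; first by rewrite inordK.
by apply: val_inj => /=; rewrite e inordK.
Qed.

Definition phi (X : {set V}) (d : nat) := #|[set Z : {set V} | (Z \subset X) && (#|Z| <= d)]|.

Lemma phi_bound (X : {set V}) d a : 0 < a ->
  phi X d * a ^ #|X| <= a ^ d * (a.+1) ^ #|X|.
Proof.
move=> a0.
have e1 : phi X d * a ^ #|X| = \sum_(Z : {set V} | (Z \subset X) && (#|Z| <= d)) a ^ #|X|.
  by rewrite sum_nat_const; congr (_ * _); apply: eq_card => Z; rewrite inE.
rewrite e1.
apply: (@leq_trans (\sum_(Z : {set V} | (Z \subset X) && (#|Z| <= d)) a ^ d * a ^ (#|X| - #|Z|))).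
  apply: leq_sum => Z /andP[sZ hZ].
  rewrite -{1}(subnKC (subset_leq_card sZ)) expnD leq_mul2r leq_pexp2l //.
  by rewrite orbT.
apply: (@leq_trans (\sum_(Z : {set V} | Z \subset X) a ^ d * a ^ (#|X| - #|Z|))).
  by rewrite [X in _ <= X](bigID (fun Z : {set V} => #|Z| <= d)) /= leq_addr.
rewrite -big_distrr /= leq_mul2l; apply/orP; right.
rewrite (sum_subsets X (fun k => a ^ (#|X| - k))) -[a.+1]addn1 expnDn.
rewrite leq_eqVlt; apply/orP; left; apply/eqP; apply: eq_bigr => k _; by rewrite exp1n muln1.
Qed.
End Count.
Lemma arith m d P : 0 < d -> 64*d <= m -> P * 15^m <= 15^d * 16^m -> 3^m <= 2^m * (P*P) -> False.
Proof.
move=> d0 hm h1 h3.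
have m0 : 0 < m by lia.
have h4 : (3*15*15)^m <= 2^m * ((15^d*16^m)*(15^d*16^m)).
  rewrite !expnMn -mulnA.
  apply: (leq_trans (leq_mul h3 (leqnn (15^m * 15^m)))).
  by rewrite -mulnA leq_mul2l -mulnACA leq_mul ?orbT.
have h5 : 15^d*16^m <= 2^(4*d + 4*m).
  by rewrite expnD !expnM leq_mul2r leq_exp2r // orbT.
have h6 : (3*15*15)^m <= 2^(9*m + 8*d).
  apply: (leq_trans h4); rewrite (_ : 9*m + 8*d = m + ((4*d+4*m) + (4*d+4*m))); last by lia.
  by rewrite expnD leq_mul2l expnD (leq_mul h5 h5) orbT.
have h7 : ((3*15*15)^m)^8 <= (2^(9*m+8*d))^8 by rewrite leq_exp2r.
have h8 : (2^(9*m+8*d))^8 <= 2^(73 * m).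
  by rewrite -expnM leq_pexp2l //; lia.
have h9 : (2^73)^m < ((3*15*15)^8)^m.
  rewrite (ltn_exp2r _ _ m0); lia.
have e1 : ((3*15*15)^8)^m = ((3*15*15)^m)^8 by rewrite -!expnM (mulnC 8).
have e2 : (2^73)^m = 2^(73*m) by rewrite -expnM.
have := leq_trans h7 h8; rewrite -e1 -e2 => h.
by have := leq_ltn_trans h h9; rewrite ltnn.
Qed.

Section Main.
Variable V : finType.

Definition N (E : trihyp V) (S : {set V}) : {set {set V}} :=
  [set W : {set V} | [exists e in E, (S :&: Bpart e == W) && (S :&: (Bpart e :|: Rpart e) == W)]].

Lemma shatN (E : trihyp V) (S Z : {set V}) : shat (N E S) Z -> shattered E Z.
Proof.
move=> hZ; have [A0 A0N sZ] := shat_sub hZ.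
have sZS : Z \subset S.
  move: A0N; rewrite inE => /existsP[e /andP[_ /andP[/eqP eA _]]].
  by rewrite -eA in sZ; apply: (subset_trans sZ); apply: subsetIl.
apply/forallP=> W; apply/implyP=> sW; have/shatP/(_ W sW)[A AN eA] := hZ.
move: AN; rewrite inE => /existsP[e /andP[eE /andP[/eqP e1 /eqP e2]]].
apply/existsP; exists e; rewrite eE /=.
have hS : Z :&: S = Z by apply/setIidPl.
by rewrite -hS -!setIA e1 e2 setIC eA eqxx.
Qed.

Lemma cardN (E : trihyp V) (S X : {set V}) d : S \subset X -> vcdim E <= d -> #|N E S| <= phi X d.
Proof.
move=> sSX hE; apply: (leq_trans (pajor (N E S))); apply: subset_leq_card.
apply/subsetP=> Z; rewrite !inE => hZ.
have [A AN sZ] := shat_sub hZ.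
have sAS : A \subset S.
  by move: AN; rewrite inE => /existsP[e /andP[_ /andP[/eqP <- _]]]; apply: subsetIl.
rewrite (subset_trans sZ (subset_trans sAS sSX)) /=.
apply: leq_trans hE; rewrite /vcdim; exact: (@leq_bigmax_cond _ (fun Y : {set V} => shattered E Y) (fun Y : {set V} => #|Y|) Z (shatN hZ)).
Qed.

Lemma colE (a b : col) : (a == b) =
  match a, b with Bc, Bc => true | Rc, Rc => true | Wc, Wc => true | _, _ => false end.
Proof. by case: a; case: b => //=; try exact: eqxx; apply/negbTE/eqP. Qed.

Lemma capE (e1 e2 : triedge V) x : triedge_cap e1 e2 x =
  if (e1 x == Bc) && (e2 x == Bc) then Bc else if (e1 x != Wc) && (e2 x != Wc) then Rc else Wc.
Proof.
rewrite /triedge_cap /mk_triedge ffunE !inE.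
by move: (e1 x) (e2 x) => [] []; rewrite !colE.
Qed.

Lemma cardcol : #|{: col}| = 3.
Proof.
have : bijective col_code.
  exists col_decode; first exact: col_codeK.
  move=> [[|[|[|n]]] h] //; apply: val_inj; rewrite /= inordK //.
by move/bij_eq_card ->; rewrite card_ord.
Qed.

Variables (E1 E2 : trihyp V) (X : {set V}).

Definition goodp (Y : {set V}) (p : triedge V * triedge V) :=
  [&& p.1 \in E1, p.2 \in E2,
      X :&: Bpart (triedge_cap p.1 p.2) == Y &
      X :&: (Bpart (triedge_cap p.1 p.2) :|: Rpart (triedge_cap p.1 p.2)) == Y].

Definition pp (Y : {set V}) : triedge V * triedge V :=
  odflt ([ffun=> Wc], [ffun=> Wc]) [pick p | goodp Y p].

Hypothesis shX : shattered (trihyp_cap E1 E2) X.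

Lemma ppgood (Y : {set V}) : Y \subset X -> goodp Y (pp Y).
Proof.
move=> sY; rewrite /pp; case: pickP => [p //|none].
move: shX => /forallP/(_ Y)/implyP/(_ sY)/existsP[e /andP[/imset2P[e1 e2 h1 h2 ->] /andP[b1 b2]]].
by have := none (e1, e2); rewrite /goodp /= h1 h2 b1 b2.
Qed.

Lemma ppE (Y : {set V}) x : Y \subset X -> x \in X ->
  ((x \in Y) = ((pp Y).1 x == Bc) && ((pp Y).2 x == Bc)) /\
  ((x \in Y) = ((pp Y).1 x != Wc) && ((pp Y).2 x != Wc)).
Proof.
move=> sY xX; have /and4P[_ _ /eqP h1 /eqP h2] := ppgood sY.
split.
  have := congr1 (fun S : {set V} => x \in S) h1; rewrite /= !inE xX capE /= => <-.
  by move: ((pp Y).1 x) ((pp Y).2 x) => [] []; rewrite !colE.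
have := congr1 (fun S : {set V} => x \in S) h2; rewrite /= !inE xX !capE /= => <-.
by move: ((pp Y).1 x) ((pp Y).2 x) => [] []; rewrite !colE.
Qed.


Variable d : nat.
Hypotheses (hd1 : vcdim E1 <= d) (hd2 : vcdim E2 <= d).

Definition Yof (f : triedge V) := Bpart f :|: Rpart f.
Definition Sof (f : triedge V) :=
  [set x in X | (f x == Wc) && ((pp (Yof f)).1 x == Wc)] :|: Bpart f.
Definition phiF (f : triedge V) := (Sof f, (Bpart f, Rpart f)).
Definition Tg := [set q : {set V} * ({set V} * {set V}) |
  [&& q.1 \subset X, q.2.1 \in N E1 q.1 & q.2.2 \in N E2 (X :\: q.1)]].

Lemma phiF_inj : injective phiF.
Proof.
move=> f g [_ eB eR]; apply/ffunP => x.
have := congr1 (fun S : {set V} => x \in S) eB; have := congr1 (fun S : {set V} => x \in S) eR.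
rewrite /= !inE; move: (f x) (g x) => [] [] //; rewrite !colE //.
Qed.

Lemma phiF_T f : f \in pffun_on Wc X predT -> phiF f \in Tg.
Proof.
move=> hf.
have supp : forall x, f x != Wc -> x \in X.
  by case/pffun_onP: hf => /subsetP s _ x hx; apply: s; rewrite inE.
have fW : forall x, x \notin X -> f x = Wc.
  by move=> x xn; apply/eqP; apply: contraNT xn; apply: supp.
have sY : Yof f \subset X.
  by apply/subsetP=> x; rewrite !inE => h; apply: supp; move: h; move: (f x) => []; rewrite !colE.
have /and4P[g1 g2 _ _] := ppgood sY.
rewrite inE /=; apply/and3P; split.
- rewrite subUset; apply/andP; split; apply/subsetP=> x; rewrite !inE.
    by case/andP.
  by move=> h; apply: supp; move: h; move: (f x) => []; rewrite !colE.
- rewrite inE; apply/existsP; exists (pp (Yof f)).1; rewrite g1 /=.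
  apply/andP; split; apply/eqP/setP => x; rewrite !inE.
    have [xX|xnX] := boolP (x \in X); last by rewrite (fW _ xnX) !colE /= ?andbF ?(negbTE xnX).
    have [h1 h2] := ppE sY xX; move: h1 h2; rewrite /Yof !inE /=.
    by move: (f x) ((pp (Yof f)).1 x) ((pp (Yof f)).2 x) => [] [] []; rewrite !colE.
  have [xX|xnX] := boolP (x \in X); last by rewrite (fW _ xnX) !colE /= ?andbF ?(negbTE xnX).
  have [h1 h2] := ppE sY xX; move: h1 h2; rewrite /Yof !inE /=.
  by move: (f x) ((pp (Yof f)).1 x) ((pp (Yof f)).2 x) => [] [] []; rewrite !colE.
- rewrite inE; apply/existsP; exists (pp (Yof f)).2; rewrite g2 /=.
  apply/andP; split; apply/eqP/setP => x; rewrite !inE.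
    have [xX|xnX] := boolP (x \in X); last by rewrite (fW _ xnX) !colE /= ?andbF ?(negbTE xnX).
    have [h1 h2] := ppE sY xX; move: h1 h2; rewrite /Yof !inE /=.
    by move: (f x) ((pp (Yof f)).1 x) ((pp (Yof f)).2 x) => [] [] []; rewrite !colE.
  have [xX|xnX] := boolP (x \in X); last by rewrite (fW _ xnX) !colE /= ?andbF ?(negbTE xnX).
  have [h1 h2] := ppE sY xX; move: h1 h2; rewrite /Yof !inE /=.
  by move: (f x) ((pp (Yof f)).1 x) ((pp (Yof f)).2 x) => [] [] []; rewrite !colE.
Qed.

Lemma cardTg : #|Tg| <= 2^#|X| * (phi X d * phi X d).
Proof.
rewrite -sum1_card.
rewrite (partition_big (fun q : {set V} * ({set V} * {set V}) => q.1) (fun S : {set V} => S \in powerset X)); last first.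
  by move=> q; rewrite inE powersetE => /and3P[].
apply: (@leq_trans (\sum_(S in powerset X) (phi X d * phi X d))); last first.
  by rewrite sum_nat_const card_powerset.
apply: leq_sum => S; rewrite powersetE => sSX.
have -> : \sum_(q | (q \in Tg) && (q.1 == S)) 1 = #|[set q in Tg | q.1 == S]|.
  by rewrite -sum1_card; apply: eq_bigl => q; rewrite inE.
apply: (@leq_trans #|setX (N E1 S) (N E2 (X :\: S))|); last first.
  by rewrite cardsX leq_mul // cardN // subsetDl.
rewrite -(@card_in_imset _ _ snd); last first.
  move=> [a b] [a' b']; rewrite !inE /= => /andP[_ /eqP ->] /andP[_ /eqP ->] -> //.
apply: subset_leq_card; apply/subsetP => w /imsetP[q]; rewrite !inE => /andP[/and3P[_ h1 h2] /eqP eq] ->.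
by rewrite -eq h1 h2.
Qed.

Lemma key : 3^#|X| <= 2^#|X| * (phi X d * phi X d).
Proof.
apply: leq_trans cardTg.
have -> : 3 ^ #|X| = #|pffun_on Wc X predT| by rewrite card_pffun_on cardT -?cardE cardcol.
rewrite -(card_imset _ phiF_inj); apply: subset_leq_card.
by apply/subsetP=> q /imsetP[f hf ->]; apply: phiF_T.
Qed.

End Main.

Theorem lemma4p5 : exists C : nat, 0 < C /\
  forall (V : finType) (E1 E2 : trihyp V) (d : nat),
    1 <= d -> vcdim E1 <= d -> vcdim E2 <= d ->
    vcdim (trihyp_cap E1 E2) <= C * d.
Proof.
exists 64; split => // V E1 E2 d hd h1 h2.
rewrite /vcdim; apply/bigmax_leqP => X hX.
rewrite leqNgt; apply/negP => hlt.
apply: (@arith #|X| d (phi X d) hd (ltnW hlt)).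
  exact: (@phi_bound V X d 15).
exact: (key hX h1 h2).
Qed.
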